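(* Let $\lambda\in\mathbb R$ with $\alpha=1-\lambda>0$, and let $\mathcal Q_\lambda$ be a $\lambda$-exponential family satisfying Assumptions A and B. Let $x_1,\dots,x_N\in\mathcal X$ satisfy $x_i\in S_\vartheta$ for all $i$ and all $\vartheta\in\operatorname{dom}\varphi_\lambda$. Let $J\ge1$, weights $\xi_{k,1},\dots,\xi_{k,J}\ge0$ summing to $1$ and parameters $\vartheta_{k,1},\dots,\vartheta_{k,J}\in\operatorname{dom}\varphi_\lambda$, and for $j\in\{1,\dots,J\}$ define $\gamma_{k,j}(x)=\frac{\xi_{k,j}q_{\vartheta_{k,j}}(x)}{\sum_{j'=1}^J\xi_{k,j'}q_{\vartheta_{k,j'}}(x)}$. Fix $j$, assume $\sum_{i'}\gamma_{k,j}(x_{i'})>0$, set $w_i=\gamma_{k,j}(x_i)/\sum_{i'=1}^N\gamma_{k,j}(x_{i'})$ and $\bar T=\sum_{i=1}^Nw_iT(x_i)$, and suppose there exists $\vartheta_{k+1,j}\in\operatorname{dom}\varphi_\lambda$ with $q^{(\alpha)}_{\vartheta_{k+1,j}}(T)=\bar T$. Let $F(\vartheta)=\sum_{i=1}^N\gamma_{k,j}(x_i)\log q_\vartheta(x_i)$. (i) If $\lambda=0$, $\vartheta_{k+1,j}$ maximizes $F$ over $\operatorname{dom}\varphi_\lambda$. (ii) If $\lambda<0$ (resp. $\lambda>0$), $\vartheta_{k+1,j}$ maximizes over $\operatorname{dom}\varphi_\lambda$ the function $\vartheta\mapsto\big(\sum_{i'}\gamma_{k,j}(x_{i'})\big)\big(c_\lambda(\vartheta,\bar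 T)-\varphi_\lambda(\vartheta)\big)$, which is a lower bound (resp. upper bound) of $F$ on $\operatorname{dom}\varphi_\lambda$.
   Context: $\mathcal H$ is a finite-dimensional real Hilbert space; $\mathcal X$ a measurable space with measure $m$; $p(f)=\int fp\,dm$. Conventions $\log s=-\infty$ for $s\le0$, $\exp(-\infty)=0$. Coupling $c_\lambda(u,v)=\frac1\lambda\log(1+\lambda\langle u,v\rangle)$ ($\lambda\ne0$), $c_0=\langle\cdot,\cdot\rangle$. For measurable $T:\mathcal X\to\mathcal H$: $\varphi_\lambda(\vartheta)=\log\int\exp(c_\lambda(\vartheta,T))dm$, $\operatorname{dom}\varphi_\lambda=\{\varphi_\lambda<+\infty\}$, $q_\vartheta=\exp(c_\lambda(\vartheta,T)-\varphi_\lambda(\vartheta))$, $\mathcal Q_\lambda=\{q_\vartheta:\vartheta\in\operatorname{dom}\varphi_\lambda\}$, support $S_\vartheta=\{x:1+\lambda\langle\vartheta,T(x)\rangle>0\}$. Escort $p^{(\alpha)}=p^\alpha/\int p^\alpha dm$; $p_{|Y}=p\mathbf 1_Y$. Compatibility: $p$ is $q_\vartheta$-compatible if $\int p_{|S_\vartheta}^\alpha dm\in(0,\infty)$ and $\int Tp_{|S_\vartheta}^\alpha dm$ has finite components; $\mathcal Q_\lambda$-compatible if for every $\vartheta\in\operatorname{dom}\varphi_\lambda$. Assumption A: $\alpha>0$ and $\varphi_\lambda$ proper (never $-\infty$, nonempty domain). Assumption B: there is a nonempty $S_\lambda$ with $S_\vartheta=S_\lambda$ for all $\vartheta\in\operatorname{dom}\varphi_\lambda$,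 and each $q_\vartheta\in\mathcal Q_\lambda$ is $\mathcal Q_\lambda$-compatible. *)

(* Defs.v *)
From HB Require Import structures.
From mathcomp Require Import all_boot all_order all_algebra.
From mathcomp Require Import all_classical all_reals all_analysis.
Set Implicit Arguments. Unset Strict Implicit. Unset Printing Implicit Defensive.
Import Order.TTheory GRing.Theory Num.Theory.
Local Open Scope classical_set_scope.
Local Open Scope ring_scope.

Section LambdaExp.
Variable R : realType.
Variable n : nat.

(* H = R^n with its standard inner product (any finite-dim. real Hilbert
   space is isometric to such an R^n). *)
Definition dotH (u v : 'rV[R]_n) : R := \sum_(i < n) u 0 i * v 0 i.

Definition elog (s : \bar R) : \bar R :=
  match s with
  | EFin r => if 0 < r then (ln r)%:E else -oo%E
  | EPInf => +oo%E
  | ENInf => -oo%E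
  end.

Definition eexp (s : \bar R) : \bar R :=
  match s with
  | EFin r => (expR r)%:E
  | EPInf => +oo%E
  | ENInf => 0%E
  end.

Definition coupling (lam : R) (u v : 'rV[R]_n) : \bar R :=
  if lam == 0 then (dotH u v)%:E
  else if 0 < 1 + lam * dotH u v then (ln (1 + lam * dotH u v) / lam)%:E
  else -oo%E.

Variables (d : measure_display) (X : measurableType d).
Variable (m : {measure set X -> \bar R}).
Variable T : X -> 'rV[R]_n.

Definition phi (lam : R) (th : 'rV[R]_n) : \bar R :=
  elog (\int[m]_x eexp (coupling lam th (T x)))%E.

Definition domphi (lam : R) : set 'rV[R]_n := [set th | (phi lam th < +oo)%E].

(* q_theta (real valued; meaningful for theta in dom phi) *)
Definition qfam (lam : R) (th : 'rV[R]_n) (x : X) : R :=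
  fine (eexp (coupling lam th (T x) - phi lam th)%E).

Definition suppS (lam : R) (th : 'rV[R]_n) : set X :=
  [set x | 0 < 1 + lam * dotH th (T x)].

Definition restr (p : X -> R) (Y : set X) : X -> R :=
  fun x => p x * \1_Y x.

Definition compatible (alpha lam : R) (p : X -> R) (th : 'rV[R]_n) : Prop :=
  (0 < \int[m]_x ((restr p (suppS lam th) x) `^ alpha)%:E)%E /\
  (\int[m]_x ((restr p (suppS lam th) x) `^ alpha)%:E < +oo)%E /\
  (forall i : 'I_n, m.-integrable setT
     (fun x => (T x 0 i * (restr p (suppS lam th) x) `^ alpha)%:E)).

Definition Qcompatible (alpha lam : R) (p : X -> R) : Prop :=
  forall th, domphi lam th -> compatible alpha lam p th.

Definition assumptionA (alpha lam : R) : Prop :=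
  0 < alpha /\ (forall th, phi lam th != -oo%E) /\ (exists th, domphi lam th).

Definition assumptionB (alpha lam : R) : Prop :=
  (exists2 S : set X, S !=set0 & forall th, domphi lam th -> suppS lam th = S) /\
  (forall th, domphi lam th -> Qcompatible alpha lam (qfam lam th)).

Definition escort_mean (alpha lam : R) (th : 'rV[R]_n) : 'rV[R]_n :=
  \row_i (Rintegral m setT (fun x => T x 0 i * (qfam lam th x) `^ alpha) /
          Rintegral m setT (fun x => (qfam lam th x) `^ alpha)).

Definition gam (lam : R) (J : nat) (xi : 'I_J -> R) (ths : 'I_J -> 'rV[R]_n)
  (j : 'I_J) (x : X) : R :=
  xi j * qfam lam (ths j) x / \sum_(j' < J) xi j' * qfam lam (ths j') x.

End LambdaExp.

(* Main.v *)
Require Import Defs.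
From HB Require Import structures.
From mathcomp Require Import all_boot all_order all_algebra.
From mathcomp Require Import all_classical all_reals all_analysis.
From mathcomp Require Import ring lra.
Import Order.TTheory GRing.Theory Num.Theory.
Local Open Scope classical_set_scope.
Local Open Scope ring_scope.

Set Implicit Arguments. Unset Strict Implicit. Unset Printing Implicit Defensive.
Section K.
Context (R : realType) (n : nat) (d : measure_display) (X : measurableType d)
  (m : {measure set X -> \bar R}).

Lemma int_fin {f : X -> R} {r} : measurable_fun setT f -> (forall x, 0 <= f x) ->
  (\int[m]_x (f x)%:E = r%:E)%E -> m.-integrable setT (EFin \o f).
Proof.
move=> mf f0 hr; apply/integrableP; split; first exact/measurable_realfun.measurable_EFinP.
under eq_integral do rewrite /= ger0_norm//.
by rewrite hr ltry.
Qed.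

Lemma key_int (f f' h0 : X -> R) (h : 'I_n -> X -> R) (c0 c1 : R) (c : 'I_n -> R) r r' :
 measurable_fun setT f -> (forall x, 0 <= f x) -> (\int[m]_x (f x)%:E = r%:E)%E ->
 measurable_fun setT f' -> (forall x, 0 <= f' x) -> (\int[m]_x (f' x)%:E = r'%:E)%E ->
 m.-integrable setT (EFin \o h0) -> (forall i, m.-integrable setT (EFin \o h i)) ->
 (forall x, c0 * f' x + c1 * h0 x + \sum_(i < n) c i * h i x <= f x) ->
 c0 * r' + c1 * (\int[m]_x h0 x) + \sum_(i < n) c i * (\int[m]_x h i x) <= r.
Proof.
move=> mf f0 hr mf' f0' hr' ih0 ih hle.
have iF := int_fin mf f0 hr.
have iF' := int_fin mf' f0' hr'.
pose G x := c0 * f' x + c1 * h0 x + \sum_(i < n) c i * h i x.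
have GE : EFin \o G = (fun x => ((c0%:E * (f' x)%:E + c1%:E * (h0 x)%:E) +
     \sum_(i < n) (c i)%:E * (h i x)%:E)%E).
  apply/funext => x /=; rewrite /G !EFinD -sumEFin !EFinM.
  by [].
have i1 : m.-integrable setT (fun x => c0%:E * (f' x)%:E)%E by exact: (integrableZl measurableT).
have i2 : m.-integrable setT (fun x => c1%:E * (h0 x)%:E)%E by exact: (integrableZl measurableT).
have i3 : m.-integrable setT (fun x => \sum_(i < n) (c i)%:E * (h i x)%:E)%E.
  by apply: (integrable_sum measurableT) => i _; apply: (integrableZl measurableT); exact: ih.
have i12 : m.-integrable setT (fun x => c0%:E * (f' x)%:E + c1%:E * (h0 x)%:E)%E.
  exact: (integrableD measurableT).
have iG : m.-integrable setT (EFin \o G).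
  by rewrite GE; exact: (integrableD measurableT i12 i3).
have := le_integral measurableT iG iF (fun x _ => hle x).
rewrite GE (integralD measurableT)// (integralD measurableT)// (integralZl measurableT)// (integralZl measurableT)//.
rewrite (integral_sum measurableT); last by move=> i; apply: (integrableZl measurableT); exact: ih.
rewrite (eq_bigr (fun i => (c i)%:E * \int[m]_x (h i x)%:E)%E); last by move=> i _; rewrite (integralZl measurableT (ih i)).
rewrite hr hr' /Rintegral.
have fh0 := integrable_fin_num measurableT ih0.
have fh i := integrable_fin_num measurableT (ih i).
rewrite -(fineK fh0).
under eq_bigr do rewrite -(fineK (fh _)).
by rewrite sumEFin -!EFinM -!EFinD lee_fin.
Qed.
End K.
Section F.
Context (R : realType) (n : nat) (d : measure_display) (X : measurableType d)
  (m : {measure set X -> \bar R}) (T : X -> 'rV[R]_n).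
Hypothesis hT : forall i : 'I_n, measurable_fun setT (fun y => T y 0 i).
Implicit Types (lam : R) (th v : 'rV[R]_n) (x : X).

Definition fr lam th x := fine (eexp (coupling lam th (T x))).

Lemma eexp_cE lam th v : eexp (coupling lam th v) = (fine (eexp (coupling lam th v)))%:E.
Proof. by rewrite /coupling; case: ifP => // _; case: ifP. Qed.

Lemma fr_ge0 lam th x : 0 <= fr lam th x.
Proof. by rewrite /fr /coupling; case: ifP => _ /=; [|case: ifP => _ /=]; rewrite ?expR_ge0. Qed.

Lemma fr0 th x : fr 0 th x = expR (dotH th (T x)).
Proof. by rewrite /fr /coupling eqxx. Qed.

Lemma frS lam th x : lam != 0 -> 0 < 1 + lam * dotH th (T x) ->
  fr lam th x = expR (ln (1 + lam * dotH th (T x)) / lam).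
Proof. by move=> /negbTE l0 h; rewrite /fr /coupling l0 h. Qed.

Lemma frNS lam th x : lam != 0 -> ~ (0 < 1 + lam * dotH th (T x)) -> fr lam th x = 0.
Proof. by move=> /negbTE l0 /negP/negbTE h; rewrite /fr /coupling l0 h. Qed.

Lemma dot_meas th : measurable_fun setT (fun x => dotH th (T x)).
Proof.
rewrite /dotH; apply: measurable_sum => i.
by apply: measurable_realfun.measurable_funM; [exact: measurable_cst | exact: hT].
Qed.

Lemma fr_meas lam th : measurable_fun setT (fr lam th).
Proof.
have md := dot_meas th.
have ma : measurable_fun setT (fun x => 1 + lam * dotH th (T x)).
  apply: measurable_realfun.measurable_funD; first exact: measurable_cst.
  by apply: measurable_realfun.measurable_funM => //; exact: measurable_cst.
have [->|l0] := eqVneq lam 0.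
  rewrite (_ : fr 0 th = fun x => expR (dotH th (T x))); last by apply/funext => x; rewrite fr0.
  exact: measurableT_comp (@measurable_realfun.measurable_expR R) md.
rewrite (_ : fr lam th = fun x => if 0 < 1 + lam * dotH th (T x)
   then expR (ln (1 + lam * dotH th (T x)) / lam) else 0); last first.
  apply/funext => x; case: ifPn => h; first by rewrite frS.
  by rewrite frNS //; apply/negP.
apply: measurable_fun_ifT.
- by apply: measurable_realfun.measurable_fun_ltr => //; exact: measurable_cst.
- apply: measurableT_comp (@measurable_realfun.measurable_expR R) _.
  apply: measurable_realfun.measurable_funM; last exact: measurable_cst.
  exact: measurableT_comp (@measurable_realfun.measurable_ln R) ma.
- exact: measurable_cst.
Qed.

End F.
Section G.
Context (R : realType) (n : nat) (d : measure_display) (X : measurableType d)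
  (m : {measure set X -> \bar R}) (T : X -> 'rV[R]_n).
Implicit Types (lam : R) (th v : 'rV[R]_n) (x : X).

Lemma int_fr lam th : (\int[m]_x eexp (coupling lam th (T x)) = \int[m]_x (fr T lam th x)%:E)%E.
Proof. by apply: eq_integral => x _; rewrite eexp_cE. Qed.

Lemma phi_fin lam th : phi m T lam th != -oo%E -> domphi m T lam th ->
  exists2 r, 0 < r & ((\int[m]_x (fr T lam th x)%:E)%E = r%:E /\ phi m T lam th = (ln r)%:E).
Proof.
rewrite /domphi /phi /= int_fr.
case E: (\int[m]_x (fr T lam th x)%:E)%E => [r| |] /=.
- case: ifPn => // r0 _ _; by exists r.
- by rewrite ltxx. 

- by [].
Qed.

Lemma qfam_fr lam th r x : 0 < r -> phi m T lam th = (ln r)%:E ->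
  qfam m T lam th x = fr T lam th x / r.
Proof.
move=> r0 E; rewrite /qfam E /fr /coupling.
case: ifP => _ /=; first by rewrite expRB lnK.
case: ifP => _ /=; first by rewrite expRB lnK.
by rewrite mul0r.
Qed.

End G.
Section Tan.
Context (R : realType).
Lemma conc (d u : R) : 0 <= d -> d <= 1 -> 0 < u -> expR (d * ln u) <= d * u + (1 - d).
Proof.
move=> d0 d1 u0.
have H : Itv.spec (@Itv.num_sem R) (Itv.Real `[0%Z, 1%Z]) d.
  by rewrite /Itv.spec /Itv.num_sem /= in_itv /= d0 d1 ger0_real.
pose t : {i01 R} := Itv.mk H.
have := @concave_ln R t (u : R^o) (1 : R^o) u0 ltr01.
rewrite !convRE /= ln1 mulr0 addr0 mulr1.
change (unstable.onem d) with (1 - d).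
have hp : 0 < d * u + (1 - d).
  have [->|dpos] := eqVneq d 0; first by rewrite mul0r add0r subr0.
  by apply: ltr_pwDl; [rewrite mulr_gt0// lt0r dpos| rewrite subr_ge0].
by move=> h; rewrite -[X in _ <= X]lnK ?posrE // ler_expR.
Qed.

Lemma tangent (lam t : R) : lam != 0 -> lam < 1 -> 0 < t ->
  1 + (t - 1) / lam <= expR (ln t / lam).
Proof.
move=> l0 l1 t0.
have [ln0|lp] := ltrP lam 0.
  apply: le_trans (expR_ge1Dx _); rewrite lerD2l.
  apply: ler_wnM2r; first by rewrite invr_le0 ltW.
  have := @le_ln1Dx R (t - 1); rewrite (addrC 1) subrK; apply.
  by lra.
have lpos : 0 < lam by rewrite lt_neqAle eq_sym l0.
set u := expR (ln t / lam).
have u0 : 0 < u by exact: expR_gt0.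
have h : t <= lam * u + (1 - lam).
  have := conc (ltW lpos) (ltW l1) u0.
  by rewrite /u expRK (mulrC lam) divfK // lnK ?posrE.
have h2 : (t - 1) / lam <= u - 1.
  rewrite ler_pdivrMr //; lra.
lra.
Qed.
End Tan.
Section M.
Context (R : realType) (n : nat) (d : measure_display) (X : measurableType d)
  (m : {measure set X -> \bar R}) (T : X -> 'rV[R]_n).
Hypothesis hT : forall i : 'I_n, measurable_fun setT (fun y => T y 0 i).
Implicit Types (lam : R) (th v : 'rV[R]_n) (x : X).

Lemma main_ne0 lam th thn rn r (Tbar : 'rV[R]_n) :
 lam != 0 -> lam < 1 ->
 0 < r -> (\int[m]_x (fr T lam th x)%:E = r%:E)%E ->
 0 < rn -> (\int[m]_x (fr T lam thn x)%:E = rn%:E)%E ->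
 (forall x, 0 < 1 + lam * dotH th (T x) <-> 0 < 1 + lam * dotH thn (T x)) ->
 let p := fun x => (fr T lam thn x / rn) `^ (1 - lam) in
 m.-integrable setT (EFin \o p) ->
 (forall i, m.-integrable setT (EFin \o (fun x => T x 0 i * p x))) ->
 0 < \int[m]_x p x ->
 (forall i, Tbar 0 i = (\int[m]_x (T x 0 i * p x)) / \int[m]_x p x) ->
 0 < 1 + lam * dotH thn Tbar -> 0 < 1 + lam * dotH th Tbar ->
 (ln (1 + lam * dotH th Tbar) - ln (1 + lam * dotH thn Tbar)) / lam + ln rn <= ln r.
Proof.
move=> l0 l1 r0 hr rn0 hrn hS p ip iTp Z0 hTbar A0 B0.
set A := 1 + lam * dotH thn Tbar; set B := 1 + lam * dotH th Tbar.
set Z := \int[m]_x p x.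
pose s := B / A.
have s0 : 0 < s by rewrite divr_gt0.
pose K := expR (ln s / lam).
pose rna := expR ((1 - lam) * ln rn).
pose c1 := K * rna * (s^-1 - 1) / lam.
pose c i := K * rna * (th 0 i / s - thn 0 i).
have key := key_int (fr_meas hT lam th) (@fr_ge0 _ _ _ _ T lam th) hr
   (fr_meas hT lam thn) (@fr_ge0 _ _ _ _ T lam thn) hrn ip iTp
   (c0 := K) (c1 := c1) (c := c).
have : K * rn <= r.
  apply: le_trans (key _); last first.
    move=> x.
    have [ha|ha] := boolP (0 < 1 + lam * dotH thn (T x)); last first.
      have hb : ~ (0 < 1 + lam * dotH th (T x)) by move/hS; apply/negP.
      have hp : p x = 0.
        by rewrite /p (frNS l0 (negP ha)) mul0r powR0 // subr_eq0 eq_sym (lt_eqF l1).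
      rewrite (frNS l0 (negP ha)) (frNS l0 hb) hp !mulr0 !add0r big1 //.
      by move=> i _; rewrite mulr0 mulr0.
    have hb : 0 < 1 + lam * dotH th (T x) by apply/hS.
    rewrite (frS l0 ha) (frS l0 hb).
    set a := 1 + lam * dotH thn (T x) in ha *.
    set b := 1 + lam * dotH th (T x) in hb *.
    set E := expR (ln a / lam).
    set P := p x.
    have hp : P = expR ((1 - lam) * (ln a / lam - ln rn)).
      rewrite /P /p (frS l0 ha) -/a -/E /powR gt_eqF ?divr_gt0 ?expR_gt0 //.
      by rewrite ln_div ?posrE ?expR_gt0 // expRK.
    have rnaP : rna * P = E / a.
      rewrite hp /rna -expRD -[X in _ = _ / X]lnK ?posrE // -expRB /E.
      congr expR; field; exact: l0.
    have hsum : \sum_(i < n) c i * (T x 0 i * P) =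
        K * (rna * P) * (dotH th (T x) / s - dotH thn (T x)).
      rewrite /dotH mulr_suml -sumrB mulr_sumr; apply: eq_bigr => i _.
      rewrite /c; ring.
    rewrite hsum.
    have eb : dotH th (T x) = (b - 1) / lam by rewrite /b; field.
    have ea : dotH thn (T x) = (a - 1) / lam by rewrite /a; field.
    rewrite eb ea.
    have s0' : s != 0 by rewrite gt_eqF.
    have -> : K * E + c1 * P + K * (rna * P) * ((b - 1) / lam / s - (a - 1) / lam)
       = K * E + K * (rna * P) * ((b / s - a) / lam).
      rewrite /c1; field; by rewrite l0 s0'.
    rewrite rnaP.
    have a0 : a != 0 by rewrite gt_eqF.
    have -> : K * E + K * (E / a) * ((b / s - a) / lam) =
        K * E * (1 + (b / (s * a) - 1) / lam).
      by field; rewrite l0 s0' a0.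
    have -> : expR (ln b / lam) = K * E * expR (ln (b / (s * a)) / lam).
      have lt : ln (b / (s * a)) = ln b - (ln s + ln a).
        have lsa : ln (s * a) = ln s + ln a by apply: lnM; rewrite posrE.
        by rewrite ln_div ?posrE ?lsa // mulr_gt0.
      rewrite lt /K /E -!expRD.
      congr expR; field; exact: l0.
    apply: ler_wpM2l; first by rewrite mulr_ge0 // expR_ge0.
    by apply: tangent => //; rewrite divr_gt0 // mulr_gt0.
  rewrite -[leLHS]addr0 -addrA lerD2l le_eqVlt; apply/orP; left; apply/eqP.
  have Zn0 : Z != 0 by rewrite gt_eqF.
  have eT i : \int[m]_x (T x 0 i * p x) = Tbar 0 i * Z by rewrite hTbar divfK.
  under eq_bigr do rewrite eT.
  have -> : \sum_(i < n) c i * (Tbar 0 i * Z) =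
     K * rna * Z * (dotH th Tbar / s - dotH thn Tbar).
    rewrite /dotH mulr_suml -sumrB mulr_sumr; apply: eq_bigr => i _.
    rewrite /c; ring.
  have eB : dotH th Tbar = (B - 1) / lam by rewrite /B; field.
  have eA : dotH thn Tbar = (A - 1) / lam by rewrite /A; field.
  rewrite eB eA /c1 /s -/Z. have A0' : 0 < A := A0. have B0' : 0 < B := B0. clear key eT hTbar eB eA. clearbody c c1 K rna Z A B. field.
  by rewrite l0 (gt_eqF A0') (gt_eqF B0').
move=> Kr.
have : ln (K * rn) <= ln r by rewrite ler_ln ?posrE ?mulr_gt0 ?expR_gt0.
rewrite lnM ?posrE ?expR_gt0 // expRK /s ln_div ?posrE //.
Qed.
End M.
Section M0.
Context (R : realType) (n : nat) (d : measure_display) (X : measurableType d)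
  (m : {measure set X -> \bar R}) (T : X -> 'rV[R]_n).
Hypothesis hT : forall i : 'I_n, measurable_fun setT (fun y => T y 0 i).
Implicit Types (lam : R) (th v : 'rV[R]_n) (x : X).

Lemma main_0 th thn rn r (Tbar : 'rV[R]_n) :
 0 < r -> (\int[m]_x (fr T 0 th x)%:E = r%:E)%E ->
 0 < rn -> (\int[m]_x (fr T 0 thn x)%:E = rn%:E)%E ->
 let q := fun x => fr T 0 thn x / rn in
 (forall i, m.-integrable setT (EFin \o (fun x => T x 0 i * q x))) ->
 (forall i, Tbar 0 i = (\int[m]_x (T x 0 i * q x)) / \int[m]_x q x) ->
 dotH th Tbar - ln r <= dotH thn Tbar - ln rn.
Proof.
move=> r0 hr rn0 hrn q iTq hTbar.
have Z1 : \int[m]_x q x = 1.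
  rewrite /Rintegral /q.
  under eq_integral do rewrite mulrC EFinM.
  rewrite (integralZl measurableT (int_fin (fr_meas hT 0 thn) (@fr_ge0 _ _ _ _ T 0 thn) hrn)).
  by rewrite hrn /= mulVf // gt_eqF.
pose c := dotH th Tbar - dotH thn Tbar.
pose E := expR c.
pose cc i := E * rn * (th 0 i - thn 0 i).
have i0 : m.-integrable setT (EFin \o (fun _ : X => (0:R))) by exact: integrable0.
have key := key_int (fr_meas hT 0 th) (@fr_ge0 _ _ _ _ T 0 th) hr
   (fr_meas hT 0 thn) (@fr_ge0 _ _ _ _ T 0 thn) hrn i0 iTq
   (c0 := E * (1 - c)) (c1 := 0) (c := cc).
have : E * rn <= r.
  apply: le_trans (key _); last first.
    move=> x; rewrite !fr0 mul0r addr0.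
    have -> : \sum_(i < n) cc i * (T x 0 i * q x) =
        E * expR (dotH thn (T x)) * (dotH th (T x) - dotH thn (T x)).
      rewrite [in RHS]/dotH -sumrB mulr_sumr; apply: eq_bigr => i _.
      rewrite /cc /q fr0 /dotH; field; by rewrite gt_eqF.
    have -> : expR (dotH th (T x)) = E * expR (dotH thn (T x)) *
         expR (dotH th (T x) - dotH thn (T x) - c).
      by rewrite /E -!expRD; congr expR; ring.
    rewrite mulrAC -mulrDr; apply: ler_wpM2l; first by rewrite mulr_ge0 // expR_ge0.
    by apply: le_trans (expR_ge1Dx _); lra.
  have eT i : \int[m]_x (T x 0 i * q x) = Tbar 0 i by rewrite hTbar Z1 divr1.
  under eq_bigr do rewrite eT.
  have -> : \sum_(i < n) cc i * Tbar 0 i = E * rn * c.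
    rewrite /c /dotH -sumrB mulr_sumr; apply: eq_bigr => i _; rewrite /cc; ring.
  rewrite le_eqVlt; apply/orP; left; apply/eqP; ring.
move=> Er.
have : ln (E * rn) <= ln r by rewrite ler_ln ?posrE ?mulr_gt0 ?expR_gt0.
rewrite lnM ?posrE ?expR_gt0 // expRK /c; lra.
Qed.
End M0.
Section H.
Context (R : realType) (n : nat) (d : measure_display) (X : measurableType d)
  (m : {measure set X -> \bar R}) (T : X -> 'rV[R]_n).
Implicit Types (lam : R) (th v : 'rV[R]_n) (x : X).

Lemma qfam_ge0 lam th x : 0 <= qfam m T lam th x.
Proof.
rewrite /qfam; case: (coupling lam th (T x) - phi m T lam th)%E => [r| |] //=; exact: expR_ge0.

Qed.

Lemma restr_q lam th : restr (qfam m T lam th) (suppS T lam th) = qfam m T lam th.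
Proof.
apply/funext => x; rewrite /restr indicE.
have [xs|xs] := boolP (x \in suppS T lam th); first by rewrite mulr1.
rewrite mulr0; move: xs; rewrite notin_setE /suppS /= => xs.
rewrite /qfam /coupling.
have [l0|l0] := eqVneq lam 0; first by exfalso; apply: xs; rewrite l0 mul0r addr0.
have -> : (0 < 1 + lam * dotH th (T x)) = false by apply/negP.
by case: (phi m T lam th).
Qed.

Lemma dotH_sum (N : nat) th (a : 'I_N -> R) (w : 'I_N -> 'rV[R]_n) :
  dotH th (\sum_(i < N) a i *: w i) = \sum_(i < N) a i * dotH th (w i).
Proof.
rewrite /dotH.
under eq_bigr do rewrite summxE mulr_sumr.
rewrite exchange_big; apply: eq_bigr => i _; rewrite mulr_sumr.
by apply: eq_bigr => j _; rewrite mxE; ring.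
Qed.

Lemma wsum_pos (N : nat) (w b : 'I_N -> R) : (forall i, 0 <= w i) ->
  (forall i, 0 < b i) -> 0 < \sum_(i < N) w i -> 0 < \sum_(i < N) w i * b i.
Proof.
move=> w0 b0 s0.
have ge : forall i, 0 <= w i * b i by move=> i; rewrite mulr_ge0 // ltW.
rewrite lt0r sumr_ge0 // andbT.
apply/negP => /eqP/psumr_eq0P => /(_ (fun i _ => ge i)) h.
suff : \sum_(i < N) w i = 0 by move=> e; move: s0; rewrite e ltxx.
apply: big1 => i _; have /eqP := h i isT.
by rewrite mulf_eq0 (gt_eqF (b0 i)) orbF => /eqP.
Qed.

Lemma jensen_ln (N : nat) (g b : 'I_N -> R) : (forall i, 0 <= g i) ->
  (forall i, 0 < b i) -> 0 < \sum_(i < N) g i ->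
  \sum_(i < N) g i * ln (b i) <=
  (\sum_(i < N) g i) * ln ((\sum_(i < N) g i * b i) / \sum_(i < N) g i).
Proof.
move=> g0 b0 s0.
set B := (\sum_(i < N) g i * b i) / \sum_(i < N) g i.
have B0 : 0 < B by rewrite /B divr_gt0 // wsum_pos.
have h i : ln (b i) <= ln B + (b i / B - 1).
  have := @le_ln1Dx R (b i / B - 1).
  rewrite (addrC 1) subrK ln_div ?posrE // => H.
  have bB : 0 < b i / B by rewrite divr_gt0.
  have : ln (b i) - ln B <= b i / B - 1 by apply: H; lra.
  lra.
apply: le_trans (_ : \sum_(i < N) g i * (ln B + (b i / B - 1)) <= _).
  by apply: ler_sum => i _; apply: ler_wpM2l.
have -> : \sum_(i < N) g i * (ln B + (b i / B - 1)) =
   (\sum_(i < N) g i) * ln B + ((\sum_(i < N) g i * b i) / B - \sum_(i < N) g i).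
  rewrite mulr_suml mulr_suml -sumrB -big_split /=; apply: eq_bigr => i _; ring.
have SB : (\sum_(i < N) g i * b i) / B = \sum_(i < N) g i.
  rewrite /B; field; apply/andP; split; rewrite gt_eqF //; exact: wsum_pos.
by rewrite SB subrr addr0.
Qed.
End H.

Unset Implicit Arguments. Set Strict Implicit.

Theorem proposition13 (R : realType) (n : nat) (d : measure_display)
  (X : measurableType d) (m : {measure set X -> \bar R}) (T : X -> 'rV[R]_n)
  (lam : R) (N J : nat) (x : 'I_N -> X) (xi : 'I_J -> R)
  (ths : 'I_J -> 'rV[R]_n) (j : 'I_J) (thnew : 'rV[R]_n) :
  (forall i : 'I_n, measurable_fun setT (fun y => T y 0 i)) ->
  0 < 1 - lam ->
  assumptionA m T (1 - lam) lam ->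
  assumptionB m T (1 - lam) lam ->
  (forall i th, domphi m T lam th -> suppS T lam th (x i)) ->
  (0 < J)%N ->
  (forall j', 0 <= xi j') -> \sum_(j' < J) xi j' = 1 ->
  (forall j', domphi m T lam (ths j')) ->
  let g := fun i => gam m T lam xi ths j (x i) in
  0 < \sum_(i < N) g i ->
  let Tbar := \sum_(i < N) (g i / \sum_(i' < N) g i') *: T (x i) in
  domphi m T lam thnew ->
  escort_mean m T (1 - lam) lam thnew = Tbar ->
  let F := fun th => \sum_(i < N) g i * ln (qfam m T lam th (x i)) in
  let G := fun th => ((\sum_(i < N) g i)%:E *
                      (coupling lam th Tbar - phi m T lam th))%E in
  (lam = 0 -> forall th, domphi m T lam th -> F th <= F thnew) /\
  (lam < 0 -> (forall th, domphi m T lam th -> (G th <= G thnew)%E) /\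
              (forall th, domphi m T lam th -> (G th <= (F th)%:E)%E)) /\
  (0 < lam -> (forall th, domphi m T lam th -> (G th <= G thnew)%E) /\
              (forall th, domphi m T lam th -> ((F th)%:E <= G th)%E)).
Proof.
move=> hTm hal [_ [hphi _]] [[S _ hS] hcomp] hsupp hJ hxi hxs hths g Hg Tbar
  hnew hesc F G.
have gge0 i : 0 <= g i.
  rewrite /g /gam; apply: divr_ge0; first by rewrite mulr_ge0 // qfam_ge0.
  by apply: sumr_ge0 => j' _; rewrite mulr_ge0 // qfam_ge0.
have sg0 : 0 <= \sum_(i < N) g i by exact: ltW.
have [rn rn0 [hrn phin]] := phi_fin (hphi thnew) hnew.
have qn : qfam m T lam thnew = fun x => fr T lam thnew x / rn.
  by apply/funext => y; rewrite (qfam_fr _ rn0 phin).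
have [c1 [c2 c3]] := hcomp thnew hnew thnew hnew.
rewrite restr_q qn /= in c1 c2 c3.
pose p := fun x => (fr T lam thnew x / rn) `^ (1 - lam).
have ip : m.-integrable setT (EFin \o p).
  apply/integrableP; split.
    apply/measurable_realfun.measurable_EFinP.
    apply: measurableT_comp (@measurable_realfun.measurable_powR R _) _.
    apply: measurable_realfun.measurable_funM; first exact: fr_meas.
    exact: measurable_cst.
  under eq_integral do rewrite /= ger0_norm ?powR_ge0 //.
  exact: c2.
have Zp : 0 < \int[m]_x p x.
  rewrite /Rintegral; move: c1 c2; rewrite /p.
  by case: (\int[m]_x _)%E => //= z z0 _; rewrite -lte_fin.
have hTb i : Tbar 0 i = (\int[m]_x (T x 0 i * p x)) / \int[m]_x p x.
  by rewrite -hesc /escort_mean mxE qn.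
have eB th : 1 + lam * dotH th Tbar =
    (\sum_(i < N) g i * (1 + lam * dotH th (T (x i)))) / \sum_(i < N) g i.
  rewrite /Tbar dotH_sum.
  have -> : \sum_(i < N) g i * (1 + lam * dotH th (T (x i))) =
     \sum_(i < N) g i + lam * \sum_(i < N) g i * dotH th (T (x i)).
    by rewrite mulr_sumr -big_split; apply: eq_bigr => i _ /=; ring.
  have -> : \sum_(i < N) g i / (\sum_(i' < N) g i') * dotH th (T (x i)) =
      (\sum_(i < N) g i * dotH th (T (x i))) / \sum_(i < N) g i.
    by rewrite mulr_suml; apply: eq_bigr => i _; ring.
  by field; rewrite gt_eqF.
have Bpos th : domphi m T lam th -> 0 < 1 + lam * dotH th Tbar.
  move=> hth; rewrite eB divr_gt0 // wsum_pos // => i.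
  exact: hsupp.
have per th : domphi m T lam th -> exists2 r, 0 < r &
    [/\ (\int[m]_y (fr T lam th y)%:E)%E = r%:E, phi m T lam th = (ln r)%:E &
       qfam m T lam th = fun y => fr T lam th y / r].
  move=> hth; have [r r0 [hr phit]] := phi_fin (hphi th) hth.
  exists r => //; split => //; apply/funext => y; exact: qfam_fr.
have sgn0 : \sum_(i < N) g i != 0 by rewrite gt_eqF.
have hsum th : (\sum_(i < N) g i) * dotH th Tbar = \sum_(i < N) g i * dotH th (T (x i)).
  rewrite /Tbar dotH_sum mulr_sumr; apply: eq_bigr => i _; by field.
have l1 : lam < 1 by lra.
have Ne0 : lam != 0 -> forall th, domphi m T lam th -> (G th <= G thnew)%E /\
    (exists a c e : R, [/\ a <= c, F th = a / lam - e & G th = ((c / lam - e)%:E)%E]).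
  move=> l0 th hth.
  have [r r0 [hr phit qt]] := per th hth.
  have Gth : G th = ((\sum_(i < N) g i) * (ln (1 + lam * dotH th Tbar) / lam - ln r))%:E.
    by rewrite /G /coupling (negbTE l0) (Bpos th hth) phit -EFinB -EFinM.
  split.
    have Gn : G thnew = ((\sum_(i < N) g i) *
       (ln (1 + lam * dotH thnew Tbar) / lam - ln rn))%:E.
      by rewrite /G /coupling (negbTE l0) (Bpos thnew hnew) phin -EFinB -EFinM.
    rewrite Gth Gn lee_fin; apply: ler_wpM2l => //.
    have hSiff : forall y, 0 < 1 + lam * dotH th (T y) <-> 0 < 1 + lam * dotH thnew (T y).
      move=> y; have e1 := hS th hth; have e2 := hS thnew hnew.
      split => hy.
        have : suppS T lam thnew y by rewrite e2 -e1.
        by [].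
      have : suppS T lam th y by rewrite e1 -e2.
      by [].
    have := main_ne0 hTm l0 l1 r0 hr rn0 hrn hSiff ip c3 Zp hTb (Bpos thnew hnew) (Bpos th hth).
    rewrite mulrBl; lra.
  exists (\sum_(i < N) g i * ln (1 + lam * dotH th (T (x i)))).
  exists ((\sum_(i < N) g i) * ln (1 + lam * dotH th Tbar)).
  exists ((\sum_(i < N) g i) * ln r).
  split.
  - rewrite eB; apply: jensen_ln => // i; exact: hsupp.
  - rewrite /F qt mulr_suml mulr_suml -sumrB; apply: eq_bigr => i _.
    rewrite (frS l0 (hsupp i th hth)) ln_div ?posrE ?expR_gt0 // expRK; ring.
  - by rewrite Gth; congr EFin; ring.
split.
  move=> l0 th hth.
  have [r r0 [hr phit qt]] := per th hth.
  have Fv th' r' : 0 < r' -> qfam m T lam th' = (fun y => fr T lam th' y / r') ->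
      F th' = (\sum_(i < N) g i) * (dotH th' Tbar - ln r').
    move=> r0' qt'; rewrite mulrBr hsum /F qt' mulr_suml -sumrB; apply: eq_bigr => i _.
    by rewrite l0 fr0 ln_div ?posrE ?expR_gt0 // expRK mulrBr.
  rewrite (Fv th r r0 qt) (Fv thnew rn rn0 qn); apply: ler_wpM2l => //.
  have pq : p = fun y => fr T lam thnew y / rn.
    apply/funext => y; rewrite /p l0 subr0 powRr1 //.
    by rewrite divr_ge0 ?fr_ge0 // ltW.
  have iTq i : m.-integrable setT
      (EFin \o (fun y => T y 0 i * (fr T lam thnew y / rn))).
    apply: (eq_integrable measurableT _ _ _ (c3 i)) => y _ /=.
    by rewrite l0 subr0 powRr1 // divr_ge0 ?fr_ge0 // ltW.
  move: hr hrn iTq hTb; rewrite pq l0 => hr hrn iTq hTb.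
  exact: (main_0 hTm r0 hr rn0 hrn iTq hTb).
split.
  move=> ln0; have l0 : lam != 0 by rewrite lt_eqF.
  split => th hth; first by case: (Ne0 l0 th hth).
  have [_ [a [c [e [ac -> ->]]]]] := Ne0 l0 th hth.
  rewrite lee_fin lerD2r; apply: ler_wnM2r => //; by rewrite invr_le0 ltW.
move=> lp; have l0 : lam != 0 by rewrite gt_eqF.
split => th hth; first by case: (Ne0 l0 th hth).
have [_ [a [c [e [ac -> ->]]]]] := Ne0 l0 th hth.
rewrite lee_fin lerD2r; apply: ler_wpM2r => //; by rewrite invr_ge0 ltW.
Qed.
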